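(* Let $M$ be a root-closed Puiseux monoid with $M\neq\{0\}$. Then: (1) $M$ is atomic if and only if $M$ is cyclic; (2) $M$ is antimatter if and only if $0$ is a limit point of $M$ (in the usual topology of $\mathbb{R}$); (3) $M$ is either atomic or antimatter.
   Context: A Puiseux monoid is an additive submonoid of $(\mathbb{Q}_{\ge 0},+)$. Its difference group is $\mathsf{gp}(M)=\{x-y\mid x,y\in M\}$. An element $x\in\mathsf{gp}(M)$ is a root element of $M$ if $nx\in M$ for some $n\in\mathbb{N}$; $M$ is root-closed if every root element of $M$ lies in $M$. An atom of $M$ is a nonzero element $a$ such that $a=x+y$ with $x,y\in M$ implies $x=0$ or $y=0$. $M$ is atomic if every element is a finite sum of atoms, antimatter if it has no atoms, and cyclic if it is generated by a single element. *)

(* Defs.v *)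
From mathcomp Require Import all_boot all_order all_algebra.
Set Implicit Arguments. Unset Strict Implicit. Unset Printing Implicit Defensive.
Import Order.TTheory GRing.Theory Num.Theory.
Local Open Scope ring_scope.

Definition puiseux_monoid (M : rat -> Prop) : Prop :=
  [/\ M 0, (forall x y, M x -> M y -> M (x + y)) & (forall x, M x -> 0 <= x)].

Definition in_gp (M : rat -> Prop) (x : rat) : Prop :=
  exists y z, [/\ M y, M z & x = y - z].

Definition root_element (M : rat -> Prop) (x : rat) : Prop :=
  in_gp M x /\ exists n : nat, (0 < n)%N /\ M (x *+ n).

Definition root_closed (M : rat -> Prop) : Prop :=
  forall x, root_element M x -> M x.

Definition is_atom (M : rat -> Prop) (a : rat) : Prop :=
  [/\ M a, a != 0 &
      forall x y, M x -> M y -> a = x + y -> x = 0 \/ y = 0].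

Definition atomic (M : rat -> Prop) : Prop :=
  forall x, M x -> exists s : seq rat,
      (forall a, a \in s -> is_atom M a) /\ x = \sum_(a <- s) a.

Definition antimatter (M : rat -> Prop) : Prop :=
  forall a, ~ is_atom M a.

Definition cyclic_monoid (M : rat -> Prop) : Prop :=
  exists g : rat, forall x, M x <-> exists k : nat, x = g *+ k.

Definition nontrivial (M : rat -> Prop) : Prop := exists x, M x /\ x != 0.

(* 0 is a limit point of M ⊆ Q ⊆ R: every neighbourhood of 0 contains a
   point of M other than 0.  Since Q is dense in R, quantifying over
   rational radii eps > 0 is equivalent to real radii. *)
Definition zero_limit_point (M : rat -> Prop) : Prop :=
  forall eps : rat, 0 < eps -> exists x, [/\ M x, x != 0 & `|x| < eps].

(* Main.v *)
Require Import Defs.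
From mathcomp Require Import all_boot all_order all_algebra.
From mathcomp Require Import ring lra.
From Stdlib Require Import Classical.
Import Order.TTheory GRing.Theory Num.Theory.
Local Open Scope ring_scope.

Lemma rat_frac (r : rat) : 0 <= r ->
  exists a b : nat, (0 < b)%N /\ r * b%:R = a%:R.
Proof.
move=> r0.
exists `|numq r|%N, `|denq r|%N; split.
  by rewrite absz_gt0 denq_neq0.
rewrite !natr_absz !ger0_norm ?numq_ge0 //.
rewrite -{1}(divq_num_den r) mulrVK //.
by rewrite unitfE intr_eq0 denq_neq0.
Qed.

Section S.
Variable M : rat -> Prop.
Hypothesis HP : puiseux_monoid M.
Hypothesis HR : root_closed M.

Lemma M0 : M 0. Proof. by case: HP. Qed.
Lemma MD x y : M x -> M y -> M (x + y). Proof. by case: HP => _ H _; apply: H. Qed.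
Lemma Mge0 x : M x -> 0 <= x. Proof. by case: HP => _ _ H; apply: H. Qed.

Lemma Mn x n : M x -> M (x *+ n).
Proof.
move=> Mx; elim: n => [|n IH]; first by rewrite mulr0n; exact: M0.
by rewrite mulrS; apply: MD.
Qed.

Lemma MB x y : M x -> M y -> y <= x -> M (x - y).
Proof.
move=> Mx My yx; apply: HR; split; first by exists x, y.
have [y0|yn0] := eqVneq y 0.
  by exists 1%N; split => //; rewrite y0 subr0 mulr1n.
have ypos : 0 < y by rewrite lt0r yn0 Mge0.
have xy0 : 0 <= x - y by rewrite subr_ge0.
have [a [b [b0 e]]] := @rat_frac ((x - y) / y) (divr_ge0 xy0 (ltW ypos)).
exists b; split => //.
have -> : (x - y) *+ b = y *+ a.
  rewrite -mulr_natr -[in RHS]mulr_natr -e.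
  by rewrite mulrA mulrCA divff ?mulr1 // mulrC.
exact: Mn.
Qed.

Arguments MD [x y].
Arguments Mn [x].
Arguments MB [x y].
Arguments Mge0 [x].

Lemma zlp_case : zero_limit_point M -> nontrivial M ->
  [/\ ~ atomic M, ~ cyclic_monoid M & antimatter M].
Proof.
move=> Z [x0 [Mx0 x0n]].
have AM : antimatter M.
  move=> a [Ma an0 Ha].
  have apos : 0 < a by rewrite lt0r an0 Mge0.
  have [x [Mx xn xa]] := Z a apos.
  have xpos : 0 < x by rewrite lt0r xn Mge0.
  rewrite ger0_norm ?ltW // in xa.
  have := Ha x (a - x) Mx (MB Ma Mx (ltW xa)).
  rewrite addrC subrK => /(_ erefl) [/eqP|]; first by rewrite (negbTE xn).
  by move/eqP; rewrite subr_eq0 => /eqP ax; move: xa; rewrite ax ltxx.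
split => //.
- move=> At; have [s [Hs e]] := At x0 Mx0.
  case: s Hs e => [|a s] Hs e; first by move: x0n; rewrite e big_nil eqxx.
  by apply: (AM a); apply: Hs; rewrite mem_head.
- move=> [g Hg].
  have Mg : M g by apply/Hg; exists 1%N; rewrite mulr1n.
  have [g0|gn0] := eqVneq g 0.
    have [k ek] := (Hg x0).1 Mx0.
    by move: x0n; rewrite ek g0 mul0rn eqxx.
  have gpos : 0 < g by rewrite lt0r gn0 Mge0.
  have [x [Mx xn xg]] := Z g gpos.
  have [k ek] := (Hg x).1 Mx.
  case: k ek => [|k] ek; first by move: xn; rewrite ek mulr0n eqxx.
  have xpos : 0 < x by rewrite lt0r xn Mge0.
  rewrite ger0_norm ?ltW // ek mulrS in xg.
  have : 0 <= g *+ k by rewrite mulrn_wge0 // ltW.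
  move: xg; lra.
Qed.

Lemma notzlp_case : ~ zero_limit_point M -> nontrivial M ->
  [/\ atomic M, cyclic_monoid M & ~ antimatter M].
Proof.
move=> NZ [x0 [Mx0 x0n]].
have [eps [epos Heps]] : exists eps, 0 < eps /\
    forall x, M x -> x != 0 -> eps <= x.
  apply: NNPP => H; apply: NZ => e epos; apply: NNPP => H2; apply: H.
  exists e; split => // x Mx xn; rewrite leNgt; apply/negP => xe.
  apply: H2; exists x; split => //; rewrite ger0_norm //; exact: Mge0.
have Hmin : forall n : nat, forall m, M m -> 0 < m -> m <= eps *+ n ->
    exists g, [/\ M g, 0 < g & forall x, M x -> 0 < x -> g <= x].
  elim=> [|n IH] m Mm mpos mle.
    by move: mle; rewrite mulr0n => mle; move: mpos; lra.
  case: (classic (forall x, M x -> 0 < x -> m <= x)) => Hm.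
    by exists m.
  have [x [Mx xpos xm]] : exists x, [/\ M x, 0 < x & x < m].
    apply: NNPP => H; apply: Hm => x Mx xpos; rewrite leNgt; apply/negP => xm.
    by apply: H; exists x.
  apply: (IH x Mx xpos).
  have := Heps (m - x) (MB Mm Mx (ltW xm)).
  rewrite subr_eq0 gt_eqF //.
  move/(_ isT); move: mle; rewrite mulrS; lra.
have x0pos : 0 < x0 by rewrite lt0r x0n Mge0.
have x0b : x0 <= eps *+ Num.Def.archi_bound (x0 / eps).
  have := archi_boundP (divr_ge0 (ltW x0pos) (ltW epos)).
  rewrite ltr_pdivrMr // => h; apply: ltW; by rewrite -mulr_natr mulrC.
have [g [Mg gpos gmin]] := Hmin _ x0 Mx0 x0pos x0b.
have mult : forall n : nat, forall x, M x -> x < g *+ n -> exists k : nat, x = g *+ k.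
  elim=> [|n IH] x Mx; first by rewrite mulr0n => h; move: (Mge0 Mx); lra.
  rewrite mulrS => h.
  have [xg|gx] := ltP x g.
    exists 0%N; rewrite mulr0n; apply/eqP; apply: contraT => xn.
    have := gmin x Mx; rewrite lt0r xn Mge0 //= => /(_ isT); lra.
  have [k ek] := IH (x - g) (MB Mx Mg gx) ltac:(lra).
  by exists k.+1; rewrite mulrS -ek addrC subrK.
have cyc : forall x, M x <-> exists k : nat, x = g *+ k.
  move=> x; split => [Mx|[k ->]]; last exact: Mn.
  apply: (mult (Num.Def.archi_bound (x / g)) x Mx).
  have := archi_boundP (divr_ge0 (Mge0 Mx) (ltW gpos)).
  rewrite ltr_pdivrMr // => h; by rewrite -mulr_natr mulrC.
have atg : is_atom M g.
  split => //; first by rewrite gt_eqF.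
  move=> x y Mx My e.
  case: (eqVneq x 0) => [->|xn]; first by left.
  case: (eqVneq y 0) => [->|yn]; first by right.
  have := gmin x Mx; rewrite lt0r xn Mge0 //= => /(_ isT) gx.
  have := gmin y My; rewrite lt0r yn Mge0 //= => /(_ isT) gy.
  move: e gx gy gpos; lra.
split.
- move=> x /cyc [k ->]; exists (nseq k g); split.
    by move=> a /nseqP [-> _].
  elim: k => [|k IH]; first by rewrite mulr0n big_nil.
  by rewrite mulrS IH /= big_cons.
- by exists g.
- by move=> A; apply: (A g).
Qed.

End S.

Theorem mainTheorem10 (M : rat -> Prop) :
  puiseux_monoid M -> root_closed M -> nontrivial M ->
  [/\ (atomic M <-> cyclic_monoid M),
      (antimatter M <-> zero_limit_point M) &
      (atomic M \/ antimatter M)].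
Proof.
move=> HP HR NT.
case: (classic (zero_limit_point M)) => Z.
  have [nA nC AM] := @zlp_case M HP HR Z NT.
  split; [by split | by split | by right].
have [A C nAM] := @notzlp_case M HP HR Z NT.
split; [by split | by split | by left].
Qed.
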